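(* Let $V$ be a finite-dimensional irreducible $\mathcal U$-module. Then there exist nonzero scalars $\varepsilon_0,\varepsilon_1\in\mathbb K$, a nonnegative integer $d$, and a decomposition $U_0,\dots,U_d$ of $V$ such that $(k_0-\varepsilon_0q^{2i-d}I)U_i=0$ and $(k_1-\varepsilon_1q^{d-2i}I)U_i=0$ for $0\le i\le d$. The sequence $\varepsilon_0,\varepsilon_1;U_0,\dots,U_d$ is unique. Moreover, with $U_{-1}=U_{d+1}=0$, for $0\le i\le d$: $(\varepsilon_0y^+_0-q^{d-2i}I)U_i\subseteq U_{i+1}$, $(\varepsilon_1y^-_1-q^{2i-d}I)U_i\subseteq U_{i+1}$, $(\varepsilon_0y^-_0-q^{d-2i}I)U_i\subseteq U_{i-1}$, $(\varepsilon_1y^+_1-q^{2i-d}I)U_i\subseteq U_{i-1}$.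
   Context: $\mathbb K$ is an algebraically closed field, $q\in\mathbb K$ nonzero and not a root of unity, $[3]_q=\frac{q^3-q^{-3}}{q-q^{-1}}$. $\mathcal U$ (isomorphic to $U_q(\widehat{sl}_2)$) is the unital associative $\mathbb K$-algebra with generators $y^{\pm}_i,k_i^{\pm1}$ ($i\in\{0,1\}$) and relations: $k_ik_i^{-1}=k_i^{-1}k_i=1$; $k_0k_1$ central; $\frac{qy^+_ik_i-q^{-1}k_iy^+_i}{q-q^{-1}}=1$; $\frac{qk_iy^-_i-q^{-1}y^-_ik_i}{q-q^{-1}}=1$; $\frac{qy^-_iy^+_i-q^{-1}y^+_iy^-_i}{q-q^{-1}}=1$; $\frac{qy^+_iy^-_j-q^{-1}y^-_jy^+_i}{q-q^{-1}}=k_0^{-1}k_1^{-1}$ ($i\ne j$); $(y^{\pm}_i)^3y^{\pm}_j-[3]_q(y^{\pm}_i)^2y^{\pm}_jy^{\pm}_i+[3]_qy^{\pm}_iy^{\pm}_j(y^{\pm}_i)^2-y^{\pm}_j(y^{\pm}_i)^3=0$ ($i\ne j$). A decomposition of $V$ is a sequence $U_0,\dots,U_d$ of nonzero subspaces with $V=U_0+\cdots+U_d$ a direct sum. Irreducible modules are nonzero by convention. *)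

(* Defs.v *)
From HB Require Import structures.
From mathcomp Require Import all_boot all_order all_algebra.
Set Implicit Arguments. Unset Strict Implicit. Unset Printing Implicit Defensive.
Import Order.TTheory GRing.Theory Num.Theory.
Local Open Scope ring_scope.

(* Index convention: generators indexed by i : bool, with false = 0, true = 1.
   The "other" index j <> i is ~~ i. *)

Definition not_root_of_unity (K : fieldType) (q : K) : Prop :=
  forall n : nat, (0 < n)%N -> q ^+ n != 1.

Definition qint3 (K : fieldType) (q : K) : K :=
  (q ^+ 3 - q ^- 3) / (q - q^-1).

Local Open Scope lfun_scope.

(* The linear maps yp i, ym i, k i, kinv i on the finite-dimensional K-space V
   (actions of y^+_i, y^-_i, k_i, k_i^{-1}) satisfy the defining relations of U. *)
Definition is_U_module (K : fieldType) (V : vectType K) (q : K)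
  (yp ym k kinv : bool -> 'End(V)) : Prop :=
  let gens := [:: yp false; yp true; ym false; ym true;
                  k false; k true; kinv false; kinv true] in
      (forall i v, k i (kinv i v) = v /\ kinv i (k i v) = v) /\
      (forall g, g \in gens -> forall v, k false (k true (g v)) = g (k false (k true v))) /\
      (forall i v, (q - q^-1)^-1 *: (q *: yp i (k i v) - q^-1 *: k i (yp i v)) = v) /\
      (forall i v, (q - q^-1)^-1 *: (q *: k i (ym i v) - q^-1 *: ym i (k i v)) = v) /\
      (forall i v, (q - q^-1)^-1 *: (q *: ym i (yp i v) - q^-1 *: yp i (ym i v)) = v) /\
      (forall i v, (q - q^-1)^-1 *: (q *: yp i (ym (~~ i) v) - q^-1 *: ym (~~ i) (yp i v))
                  = kinv false (kinv true v)) /\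
      (forall (y : bool -> 'End(V)), (y = yp \/ y = ym) -> forall i v,
        let j := ~~ i in
        y i (y i (y i (y j v))) - qint3 q *: y i (y i (y j (y i v)))
        + qint3 q *: y i (y j (y i (y i v))) - y j (y i (y i (y i v))) = 0).

Definition U_irreducible (K : fieldType) (V : vectType K)
  (yp ym k kinv : bool -> 'End(V)) : Prop :=
  (fullv : {vspace V}) != 0%VS /\
  forall W : {vspace V},
    (forall i v, v \in W ->
       [/\ yp i v \in W, ym i v \in W, k i v \in W & kinv i v \in W]) ->
    W = 0%VS \/ W = fullv.

Definition is_decomposition (K : fieldType) (V : vectType K) (d : nat)
  (U : nat -> {vspace V}) : Prop :=
  [/\ forall i, (i <= d)%N -> U i != 0%VS,
      (\sum_(i < d.+1) U i)%VS = fullv &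
      directv (\sum_(i < d.+1) U i)%VS].

Definition weight_condition (K : fieldType) (V : vectType K) (q : K)
  (k : bool -> 'End(V)) (e0 e1 : K) (d : nat) (U : nat -> {vspace V}) : Prop :=
  forall i, (i <= d)%N -> forall v, v \in U i ->
    k false v - (e0 * q ^ (2 * (i%:Z) - d%:Z)) *: v = 0 /\
    k true v - (e1 * q ^ (d%:Z - 2 * (i%:Z))) *: v = 0.

Definition Unext (K : fieldType) (V : vectType K) (d : nat)
  (U : nat -> {vspace V}) (i : nat) : {vspace V} :=
  if (i < d)%N then U i.+1 else 0%VS.
Definition Uprev (K : fieldType) (V : vectType K)
  (U : nat -> {vspace V}) (i : nat) : {vspace V} :=
  if i is j.+1 then U j else 0%VS.

(* Main.v *)
Require Import Defs.
From HB Require Import structures.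
From mathcomp Require Import all_boot all_order all_algebra.
From mathcomp Require Import ring.
Import Order.TTheory GRing.Theory Num.Theory.
Local Open Scope ring_scope.

Section Gen.
Variables (K : closedFieldType) (V : vectType K).

Lemma eigP (f : 'End(V)) a v : (v \in lker (f - a *: \1%VF)) = (f v == a *: v).
Proof. by rewrite memv_ker add_lfunE opp_lfunE scale_lfunE id_lfunE subr_eq0. Qed.

Lemma eig_exists (f : 'End(V)) : (fullv : {vspace V}) != 0%VS ->
  exists a v, v != 0 /\ f v = a *: v.
Proof.
move=> hV.
have eB := vbasisP (fullv : {vspace V}).
have : size (char_poly (passmx.mxof (vbasis fullv) (vbasis fullv) f)) != 1%N.
  by rewrite size_char_poly eqSS dimv_eq0.
case/closed_rootP => a; rewrite -eigenvalue_root_char => ha.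
have hne : passmx.leigenspace f a != 0%VS by rewrite (passmx.leigenspaceE eB) // passmx.vsof_eq0.
exists a, (vpick (passmx.leigenspace f a)); split; first by rewrite vpick0.
by move: (memv_pick (passmx.leigenspace f a)); rewrite eigP => /eqP.
Qed.

Lemma eig_indep (f : 'End(V)) (n : nat) (lam : nat -> K) (us : nat -> V) :
 (forall i j, (i < n)%N -> (j < n)%N -> lam i = lam j -> i = j) ->
 (forall i, (i < n)%N -> f (us i) = lam i *: us i) ->
 \sum_(i < n) us i = 0 -> forall i, (i < n)%N -> us i = 0.
Proof.
elim: n us => [|n IH] us hinj heig hsum i hi; first by [].
have hsum' : \sum_(i < n) (lam i - lam n) *: us i = 0.
  have := congr1 (fun x => f x - lam n *: x) hsum.
  rewrite /= linear0 scaler0 subrr linear_sum scaler_sumr -sumrB big_ord_recr /=.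
  rewrite heig // subrr addr0 => e; rewrite -[in RHS]e; apply: eq_bigr => j _.
  by rewrite heig ?scalerBl // ltnS ltnW.
have h0 : forall j, (j < n)%N -> us j = 0.
  move=> j hj.
  have e : (lam j - lam n) *: us j = 0.
    apply: (IH (fun i => (lam i - lam n) *: us i)) => //.
    + by move=> a b ha hb; apply: hinj; apply: ltnW.
    + by move=> a ha; rewrite linearZ /= heig ?scalerA ?[lam a * _]mulrC // ltnW.
  move/eqP: e; rewrite scaler_eq0 subr_eq0; case/orP => [/eqP|/eqP//].
  by move/hinj => /(_ (ltnW hj) (ltnSn n)) e; rewrite e ltnn in hj.
move: hi; rewrite ltnS leq_eqVlt => /orP[/eqP->|]; last exact: h0.
move: hsum; rewrite big_ord_recr /= big1 ?add0r // => j _; exact: h0.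
Qed.

Lemma eig_direct (f : 'End(V)) n (lam : nat -> K) (U : nat -> {vspace V}) :
  (forall i j, (i < n)%N -> (j < n)%N -> lam i = lam j -> i = j) ->
  (forall i, (i < n)%N -> forall v, v \in U i -> f v = lam i *: v) ->
  directv (\sum_(i < n) U i).
Proof.
move=> hinj hU; apply/directv_sum_independent => us hus hsum i _.
pose u k := oapp us 0 (insub k).
have hu : forall j : 'I_n, u j = us j by move=> j; rewrite /u valK.
have := @eig_indep f n lam u hinj _ _ i (ltn_ord i).
rewrite hu; apply.
  by move=> j hj; rewrite /u insubT /=; apply: hU => //; apply: hus.
by rewrite -[RHS]hsum; apply: eq_bigr => j _; rewrite hu.
Qed.

Lemma eig_bound (f : 'End(V)) n (lam : nat -> K) :
  (forall i j, (i < n)%N -> (j < n)%N -> lam i = lam j -> i = j) ->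
  (forall i, (i < n)%N -> exists v, v != 0 /\ f v = lam i *: v) ->
  (n <= \dim (fullv : {vspace V}))%N.
Proof.
move=> hinj hex.
pose E i := lker (f - lam i *: \1%VF).
have hd : directv (\sum_(i < n) E i).
  by apply: (@eig_direct f n lam) => // i _ v; rewrite eigP => /eqP.
move/directvP: hd => /= hdim.
apply: (leq_trans _ (dimvS (subvf (\sum_(i < n) E i)))); rewrite hdim.
rewrite -[X in (X <= _)%N]card_ord -sum1_card.
apply: leq_sum => i _; rewrite lt0n dimv_eq0.
have [v [hv0 hv]] := hex i (ltn_ord i).
apply/negP => /eqP hE; have : v \in E i by rewrite eigP hv.
by rewrite hE memv0 (negPf hv0).
Qed.


Lemma decomp_split (f : 'End(V)) n (D : nat -> {vspace V}) (lam : nat -> K) a v :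
  (\sum_(i < n) D i)%VS = fullv -> directv (\sum_(i < n) D i) ->
  (forall i, (i < n)%N -> forall x, x \in D i -> f x = lam i *: x) -> f v = a *: v ->
  exists2 vs : 'I_n -> V, (forall i, vs i \in D i) &
    (v = \sum_i vs i /\ forall i : 'I_n, lam i = a \/ vs i = 0).
Proof.
move=> hs hd hD hv.
have : v \in (\sum_(i < n) D i)%VS by rewrite hs memvf.
case/memv_sumP => vs hvs ev; exists vs => [i|]; first exact: hvs.
split => // i.
move/directv_sum_independent: hd => hind.
have h1 : forall j : 'I_n, true -> (fun i : 'I_n => (lam i - a) *: vs i) j \in D j.
  by move=> j _; rewrite memvZ // hvs.
have h2 : \sum_(j < n) (fun i : 'I_n => (lam i - a) *: vs i) j = 0.
  rewrite (eq_bigr (fun i => f (vs i) - a *: vs i)); last first.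
    by move=> j _; rewrite scalerBl (hD j) ?ltn_ord ?hvs.
  rewrite sumrB -linear_sum -scaler_sumr; apply/eqP; rewrite subr_eq0; apply/eqP.
  by rewrite ev in hv; exact: hv.
move: (hind _ h1 h2 i isT) => /eqP; rewrite scaler_eq0 subr_eq0.
by case/orP => /eqP; [left|right].
Qed.

Lemma decomp_val (f : 'End(V)) n (D : nat -> {vspace V}) (lam : nat -> K) a v :
  (\sum_(i < n) D i)%VS = fullv -> directv (\sum_(i < n) D i) ->
  (forall i, (i < n)%N -> forall x, x \in D i -> f x = lam i *: x) -> f v = a *: v ->
  v != 0 -> exists i, (i < n)%N /\ lam i = a.
Proof.
move=> hs hd hD hv hv0.
have [vs hvs [ev hsp]] := @decomp_split f n D lam _ v hs hd hD hv.
case: (boolP [exists i : 'I_n, lam i == a]) => [/existsP[i /eqP e]|/existsPn hn].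
  by exists i.
move: hv0; rewrite ev big1 ?eqxx // => i _.
by case: (hsp i) => // /eqP e; move: (hn i); rewrite e.
Qed.

Lemma decomp_mem (f : 'End(V)) n (D : nat -> {vspace V}) (lam : nat -> K) v j :
  (\sum_(i < n) D i)%VS = fullv -> directv (\sum_(i < n) D i) ->
  (forall i, (i < n)%N -> forall x, x \in D i -> f x = lam i *: x) ->
  (forall i j, (i < n)%N -> (j < n)%N -> lam i = lam j -> i = j) ->
  (j < n)%N -> f v = lam j *: v -> v \in D j.
Proof.
move=> hs hd hD hinj hj hv.
have [vs hvs [ev hsp]] := @decomp_split f n D lam _ v hs hd hD hv.
rewrite ev (bigD1 (Ordinal hj)) //= big1 ?addr0 //.
move=> i hi; case: (hsp i) => // /hinj e.
by move: hi; rewrite -val_eqE /= e ?eqxx.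
Qed.

Lemma pow_inj (s b : K) i j : b != 0 -> s != 0 ->
  (forall m, (0 < m)%N -> s ^+ m != 1) -> b * s ^+ (2 * i) = b * s ^+ (2 * j) -> i = j.
Proof.
move=> hb hs hr; wlog hij : i j / (i <= j)%N.
  move=> W e; case: (leqP i j) => h; first exact: W.
  by symmetry; apply: W (ltnW h) (esym e).
move=> e; move/subnKC: hij => hj; rewrite -hj mulnDr exprD mulrA in e.
have : b * s ^+ (2 * i) * 1 = b * s ^+ (2 * i) * s ^+ (2 * (j - i)) by rewrite mulr1.
move/mulfI => /(_ (mulf_neq0 hb (expf_neq0 _ hs))) e1.
case: (posnP (j - i)) => h0; first by rewrite -hj h0 addn0.
by move: (hr (2 * (j - i))%N); rewrite muln_gt0 h0 /= -e1 eqxx => /(_ isT).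
Qed.

Lemma qz (q : K) a b : q != 0 -> q ^ (a%:Z - b%:Z) = q ^+ a / q ^+ b.
Proof. by move=> hq; rewrite expfzDr // -exprnN. Qed.

Lemma qz1 (q : K) i d : q != 0 -> q ^ (2 * i%:Z - d%:Z) = q ^+ (2 * i) / q ^+ d.
Proof. by move=> hq; rewrite -PoszM qz. Qed.

Lemma qz2 (q : K) i d : q != 0 -> q ^ (d%:Z - 2 * i%:Z) = q ^+ d / q ^+ (2 * i).
Proof. by move=> hq; rewrite -PoszM qz. Qed.

End Gen.

Section Main.
Variables (K : closedFieldType) (q : K) (V : vectType K) (yp ym k kinv : bool -> 'End(V)).
Hypothesis hq : q != 0.
Hypothesis hroot : not_root_of_unity q.
Hypothesis hk : forall i v, k i (kinv i v) = v /\ kinv i (k i v) = v.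
Hypothesis hyk : forall i v, (q - q^-1)^-1 *: (q *: yp i (k i v) - q^-1 *: k i (yp i v)) = v.
Hypothesis hky : forall i v, (q - q^-1)^-1 *: (q *: k i (ym i v) - q^-1 *: ym i (k i v)) = v.

Lemma qq : q - q^-1 != 0.
Proof.
apply/negP => /eqP /(congr1 (fun x => x * q)); rewrite mulrBl mulVf // mul0r.
move/eqP; rewrite subr_eq0 => /eqP e.
by have := hroot 2 isT; rewrite expr2 e eqxx.
Qed.

Lemma raise i mu v : k i v = mu *: v -> mu != 0 ->
  k i (yp i v - mu^-1 *: v) = (mu * q ^+ 2) *: (yp i v - mu^-1 *: v).
Proof.
move=> hv hmu; have H := hyk i v; rewrite hv linearZ /= in H.
set s := q - q^-1 in H; set Y := yp i v in H *; set kY := k i Y in H.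
have H2 : q *: (mu *: Y) - q^-1 *: kY = s *: v.
  by rewrite -H [in RHS]scalerA (mulfV qq) scale1r.
have H3 : q^-1 *: kY = q *: (mu *: Y) - s *: v.
  by rewrite -H2 opprB addrC subrK.
have e1 : kY = (q * mu * q) *: Y - (q * s) *: v.
  rewrite -[kY]scale1r -(mulfV hq) -[in LHS]scalerA H3 scalerBr !scalerA.
  by congr (_ *: _ - _ *: _); ring.
rewrite linearB linearZ /= -/kY e1 hv scalerA scalerBr scalerA.
rewrite -addrA -opprD -scalerDl.
  by congr (_ *: _ - _ *: _); rewrite /s; field; rewrite ?hmu ?hq.
Qed.

Lemma lower i mu v : k i v = mu *: v -> mu != 0 ->
  k i (ym i v - mu^-1 *: v) = (mu / q ^+ 2) *: (ym i v - mu^-1 *: v).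
Proof.
move=> hv hmu; have H := hky i v; rewrite hv [ym i (mu *: v)]linearZ /= in H.
set s := q - q^-1 in H; set Y := ym i v in H *; set kY := k i Y in H.
have H2 : q *: kY - q^-1 *: (mu *: Y) = s *: v.
  by rewrite -H [in RHS]scalerA (mulfV qq) scale1r.
have H3 : q *: kY = s *: v + q^-1 *: (mu *: Y).
  by rewrite -H2 subrK.
have e1 : kY = (q^-1 * s) *: v + (q^-1 * q^-1 * mu) *: Y.
  rewrite -[kY]scale1r -(mulVf hq) -[in LHS]scalerA H3 scalerDr !scalerA.
  by congr (_ *: _ + _ *: _); ring.
rewrite linearB linearZ /= -/kY e1 hv scalerA scalerBr scalerA.
rewrite addrAC -scalerBl addrC -[in RHS]scaleNr.
by congr (_ *: _ + _ *: _); rewrite /s; field; rewrite ?hmu ?hq.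
Qed.


Hypothesis hcent : forall g, g \in [:: yp false; yp true; ym false; ym true;
                  k false; k true; kinv false; kinv true] ->
  forall v, k false (k true (g v)) = g (k false (k true v)).
Hypothesis hirr : U_irreducible yp ym k kinv.

Lemma c_exists : exists c, c != 0 /\ forall v, k false (k true v) = c *: v.
Proof.
have [hV hW] := hirr.
have [c [v0 [hv0 hc]]] := @eig_exists _ _ (k false \o k true)%VF hV.
rewrite comp_lfunE in hc.
pose E := lker ((k false \o k true)%VF - c *: \1%VF).
have memE : forall v, (v \in E) = (k false (k true v) == c *: v).
  by move=> v; rewrite (@eigP K V) comp_lfunE.
have stab : forall g, g \in [:: yp false; yp true; ym false; ym true;
                  k false; k true; kinv false; kinv true] -> forall v, v \in E -> g v \in E.
  by move=> g hg v; rewrite !memE hcent // => /eqP ->; rewrite linearZ.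
have : E = 0%VS \/ E = fullv.
  apply: hW => i v hv; split; apply: stab => //; by case: i; rewrite !inE eqxx ?orbT.
case=> hE.
  have : v0 \in E by rewrite memE hc.
  by rewrite hE memv0 (negPf hv0).
exists c; split; last by move=> v; apply/eqP; rewrite -memE hE memvf.
apply/negP => /eqP c0; move: hc; rewrite c0 scale0r => h.
have : k true v0 = 0 by rewrite -[k true v0](proj2 (hk false _)) h linear0.
by move=> h2; move: hv0; rewrite -[v0](proj2 (hk true v0)) h2 linear0 eqxx.
Qed.


Lemma eig_nz i mu v : v != 0 -> k i v = mu *: v -> mu != 0.
Proof.
move=> hv h; apply/negP => /eqP m0; move: h; rewrite m0 scale0r => h.
by move: hv; rewrite -[v](proj2 (hk i v)) h linear0 eqxx.
Qed.

Lemma kinv_eig i mu v : k i v = mu *: v -> mu != 0 -> kinv i v = mu^-1 *: v.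
Proof.
move=> h hm; rewrite -{2}[v](proj2 (hk i v)) h linearZ scalerA mulVf //.
by rewrite scale1r.
Qed.

Section Withc.
Variable c : K.
Hypothesis hc0 : c != 0.
Hypothesis hc : forall v, k false (k true v) = c *: v.

Lemma k1_of_k0 mu v : k false v = mu *: v -> mu != 0 -> k true v = (c / mu) *: v.
Proof.
move=> h hm; rewrite -[k true v](proj2 (hk false _)) hc linearZ /=.
by rewrite (kinv_eig _ _ _ h hm) scalerA.
Qed.

Lemma k0_of_k1 nu w : k true w = nu *: w -> nu != 0 -> k false w = (c / nu) *: w.
Proof.
move=> h hn; have := hc w; rewrite h linearZ /= => e.
by rewrite -[k false w]scale1r -(mulVf hn) -[in LHS]scalerA e scalerA mulrC.
Qed.


Notation ev a := (lker (k false - a *: \1%VF)).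

Lemma evP a v : (v \in ev a) = (k false v == a *: v).
Proof. exact: eigP. Qed.

Lemma ev0 a w : ev a == 0%VS -> k false w = a *: w -> w = 0.
Proof.
move=> /eqP h hw; have : w \in ev a by rewrite evP hw.
by rewrite h memv0 => /eqP.
Qed.

Lemma find_fail (b s : K) : b != 0 -> s != 0 -> (forall m, (0 < m)%N -> s ^+ m != 1) ->
  exists n, ev (b * s ^+ (2 * n)) == 0%VS.
Proof.
move=> hb hs hr.
case: (boolP [exists i : 'I_(\dim (fullv : {vspace V})).+1, ev (b * s ^+ (2 * i)) == 0%VS]).
  by case/existsP => i hi; exists i.
move/existsPn => hn.
suff : ((\dim (fullv : {vspace V})).+1 <= \dim (fullv : {vspace V}))%N by rewrite ltnn.
apply: (@eig_bound K V (k false) _ (fun i => b * s ^+ (2 * i))).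
  by move=> i j _ _; apply: pow_inj.
move=> i hi; have := hn (Ordinal hi) => /= h.
exists (vpick (ev (b * s ^+ (2 * i)))); rewrite vpick0 h; split => //.
by apply/eqP; rewrite -evP memv_pick.
Qed.

Lemma main_part : exists (e0 e1 : K) (d : nat) (U : nat -> {vspace V}),
    [/\ e0 != 0, e1 != 0, is_decomposition d U & weight_condition q k e0 e1 d U] /\
        (forall (e0' e1' : K) (d' : nat) (U' : nat -> {vspace V}),
           e0' != 0 -> e1' != 0 -> is_decomposition d' U' ->
           weight_condition q k e0' e1' d' U' ->
           [/\ e0' = e0, e1' = e1, d' = d & forall i, (i <= d)%N -> U' i = U i]) /\
        (forall i, (i <= d)%N -> forall v, v \in U i ->
           [/\ e0 *: yp false v - q ^ (d%:Z - 2 * (i%:Z)) *: v \in Unext d U i,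
               e1 *: ym true v - q ^ (2 * (i%:Z) - d%:Z) *: v \in Unext d U i,
               e0 *: ym false v - q ^ (d%:Z - 2 * (i%:Z)) *: v \in Uprev U i &
               e1 *: yp true v - q ^ (2 * (i%:Z) - d%:Z) *: v \in Uprev U i]).
Proof.
have [hV hW] := hirr.
have [mu0 [v0 [hv00 hv0]]] := @eig_exists K V (k false) hV.
have hmu0 := eig_nz _ _ _ hv00 hv0.
have hr0 : q^-1 != 0 by rewrite invr_eq0.
have hr : forall m, (0 < m)%N -> q^-1 ^+ m != 1.
  by move=> m hm; rewrite exprVn invr_eq1; apply: hroot.
have [m Pm minm] := ex_minnP (find_fail _ _ hmu0 hr0 hr).
case: m Pm minm => [|m'] Pm minm.
  by move: Pm; rewrite mulr1 => /ev0 /(_ hv0) e; rewrite e eqxx in hv00.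
pose b := mu0 * q^-1 ^+ (2 * m').
have hb0 : b != 0 by rewrite mulf_neq0 // expf_neq0.
have hbot : ev (b / q ^+ 2) == 0%VS.
  suff -> : b / q ^+ 2 = mu0 * q^-1 ^+ (2 * m'.+1) by [].
  rewrite /b mulnS exprD !exprVn exprD; field; rewrite ?expf_neq0 //.
have [m2 Pm2 minm2] := ex_minnP (find_fail _ _ hb0 hq hroot).
case: m2 Pm2 minm2 => [|d] Pm2 minm2.
  by move: Pm2; rewrite muln0 expr0 mulr1 => /minm; rewrite ltnn.
have htop : ev (b * q ^+ (2 * d) * q ^+ 2) == 0%VS.
  suff -> : b * q ^+ (2 * d) * q ^+ 2 = b * q ^+ (2 * d.+1) by [].
  by rewrite mulnS exprD; ring.
have hnz : forall i, (i <= d)%N -> ev (b * q ^+ (2 * i)) != 0%VS.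
  by move=> i hi; apply/negP => /minm2; rewrite ltnNge hi.
have hmu : forall i, b * q ^+ (2 * i) != 0 by move=> i; rewrite mulf_neq0 // expf_neq0.
pose e0 := b * q ^+ d.
have he0 : e0 != 0 by rewrite mulf_neq0 // expf_neq0.
pose e1 := c / e0.
have he1 : e1 != 0 by rewrite mulf_neq0 // invr_eq0.
pose U := fun i => ev (b * q ^+ (2 * i)).
have hUe : forall i v, v \in U i -> k false v = (b * q ^+ (2 * i)) *: v.
  by move=> i v; rewrite evP => /eqP.
have hUm : forall i v, k false v = (b * q ^+ (2 * i)) *: v -> v \in U i.
  by move=> i v h; rewrite evP h.
have hnext : forall i w, (i <= d)%N -> k false w = (b * q ^+ (2 * i) * q ^+ 2) *: w ->
    w \in Unext d U i.
  move=> i w hi hw; rewrite /Unext; case: ltnP => h.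
    by apply: hUm; rewrite hw; congr (_ *: _); rewrite mulnS exprD; ring.
  have ei : i = d by apply/eqP; rewrite eqn_leq hi h.
  by rewrite -ei in htop; rewrite (ev0 _ _ htop hw) mem0v.
have hprev : forall i w, k false w = (b * q ^+ (2 * i) / q ^+ 2) *: w -> w \in Uprev U i.
  move=> [|j] w hw /=.
    by rewrite muln0 expr0 mulr1 in hw; rewrite (ev0 _ _ hbot hw) mem0v.
  apply: hUm; rewrite hw; congr (_ *: _); rewrite mulnS exprD; field.
  by rewrite ?hb0 ?hc0 ?hq ?expf_neq0.
have hR : forall i, (i <= d)%N -> forall v, v \in U i ->
           [/\ e0 *: yp false v - q ^ (d%:Z - 2 * (i%:Z)) *: v \in Unext d U i,
               e1 *: ym true v - q ^ (2 * (i%:Z) - d%:Z) *: v \in Unext d U i,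
               e0 *: ym false v - q ^ (d%:Z - 2 * (i%:Z)) *: v \in Uprev U i &
               e1 *: yp true v - q ^ (2 * (i%:Z) - d%:Z) *: v \in Uprev U i].
  move=> i hi v hv; have hkv := hUe _ _ hv; set mu := b * q ^+ (2 * i) in hkv.
  have hmu' : mu != 0 := hmu i.
  have hkv1 := k1_of_k0 _ _ hkv hmu'.
  have hnu : c / mu != 0 by rewrite mulf_neq0 ?invr_eq0.
  rewrite qz1 // qz2 //; split.
  - have -> : e0 *: yp false v - (q ^+ d / q ^+ (2 * i)) *: v =
              e0 *: (yp false v - mu^-1 *: v).
      rewrite scalerBr scalerA; congr (_ - _ *: _); rewrite /e0 /mu; field.
      by rewrite ?hb0 ?hc0 ?hq ?expf_neq0.
    by apply: memvZ; apply: hnext => //; apply: raise.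
  - have -> : e1 *: ym true v - (q ^+ (2 * i) / q ^+ d) *: v =
              e1 *: (ym true v - (c / mu)^-1 *: v).
      rewrite scalerBr scalerA; congr (_ - _ *: _); rewrite /e1 /e0 /mu; field.
      by rewrite ?hb0 ?hc0 ?hq ?expf_neq0.
    apply: memvZ; apply: hnext => //.
    rewrite (k0_of_k1 _ _ (lower _ _ _ hkv1 hnu)); last by rewrite mulf_neq0 // invr_eq0 expf_neq0.
    congr (_ *: _); rewrite /mu; field.
    by rewrite ?hb0 ?hc0 ?hq ?expf_neq0.
  - have -> : e0 *: ym false v - (q ^+ d / q ^+ (2 * i)) *: v =
              e0 *: (ym false v - mu^-1 *: v).
      rewrite scalerBr scalerA; congr (_ - _ *: _); rewrite /e0 /mu; field.
      by rewrite ?hb0 ?hc0 ?hq ?expf_neq0.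
    by apply: memvZ; apply: hprev => //; apply: lower.
  - have -> : e1 *: yp true v - (q ^+ (2 * i) / q ^+ d) *: v =
              e1 *: (yp true v - (c / mu)^-1 *: v).
      rewrite scalerBr scalerA; congr (_ - _ *: _); rewrite /e1 /e0 /mu; field.
      by rewrite ?hb0 ?hc0 ?hq ?expf_neq0.
    apply: memvZ; apply: hprev => //.
    rewrite (k0_of_k1 _ _ (raise _ _ _ hkv1 hnu)); last by rewrite mulf_neq0 // expf_neq0.
    congr (_ *: _); rewrite /mu; field.
    by rewrite ?hb0 ?hc0 ?hq ?expf_neq0.
have hdir : directv (\sum_(i < d.+1) U i).
  apply: (@eig_direct K V (k false) d.+1 (fun i => b * q ^+ (2 * i))).
    by move=> i j _ _; apply: pow_inj.
  by move=> i _ v; apply: hUe.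
pose W := (\sum_(i < d.+1) U i)%VS.
have memW : forall j x, (j <= d)%N -> x \in U j -> x \in W.
  move=> j x hj hx; have hj' : (j < d.+1)%N by [].
  by apply: (subvP (sumv_sup (Ordinal hj') _ (subvv (U j)))).
have memN : forall j x, (j <= d)%N -> x \in Unext d U j -> x \in W.
  move=> j x hj; rewrite /Unext; case: ltnP => h; first exact: memW.
  by rewrite memv0 => /eqP ->; exact: mem0v.
have memP : forall j x, (j <= d)%N -> x \in Uprev U j -> x \in W.
  move=> [|j] x hj /=; first by rewrite memv0 => /eqP ->; exact: mem0v.
  by apply: memW; apply: ltnW.
have hrec : forall (y x : V) a e, e != 0 -> e *: y - a *: x \in W -> x \in W -> y \in W.
  move=> y x a e he h1 h2.
  have -> : y = e^-1 *: (e *: y - a *: x) + (e^-1 * a) *: x.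
    by rewrite scalerBr !scalerA mulVf // scale1r subrK.
  by rewrite memvD // memvZ.
have hgen : forall g : 'End(V), (forall j x, (j <= d)%N -> x \in U j -> g x \in W) ->
    forall v, v \in W -> g v \in W.
  move=> g hg v /memv_sumP [vs hvs ->]; rewrite linear_sum; apply: rpred_sum => j _.
  by apply: (hg j); [rewrite -ltnS; exact: ltn_ord | exact: hvs].
have hWfull : W = fullv.
  case: (hW W) => // [i v hv|hW0].
    split; apply: hgen => // j x hj hx; have [r1 r2 r3 r4] := hR j hj x hx;
      have hkx := hUe _ _ hx; have hk1 := k1_of_k0 _ _ hkx (hmu j); case: i.
    - exact: hrec _ _ _ _ he1 (memP _ _ hj r4) (memW _ _ hj hx).
    - exact: hrec _ _ _ _ he0 (memN _ _ hj r1) (memW _ _ hj hx).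
    - exact: hrec _ _ _ _ he1 (memN _ _ hj r2) (memW _ _ hj hx).
    - exact: hrec _ _ _ _ he0 (memP _ _ hj r3) (memW _ _ hj hx).
    - by rewrite hk1 memvZ // (memW _ _ hj hx).
    - by rewrite hkx memvZ // (memW _ _ hj hx).
    - rewrite (kinv_eig _ _ _ hk1) ?memvZ ?(memW _ _ hj hx) //.
      by rewrite mulf_neq0 ?invr_eq0 ?hmu.
    - by rewrite (kinv_eig _ _ _ hkx (hmu j)) memvZ // (memW _ _ hj hx).
  exfalso; have := hnz 0%N isT; rewrite -vpick0 => /negP; apply.
  have : vpick (U 0%N) \in W by apply: (memW 0%N) => //; apply: memv_pick.
  by rewrite hW0 memv0.
exists e0, e1, d, U; split; [|split]; last exact: hR.
  split => //.
  move=> i hi v hv; rewrite qz1 // qz2 //; split; apply/eqP; rewrite subr_eq0; apply/eqP.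
    rewrite (hUe _ _ hv); congr (_ *: _); rewrite /e0; field.
    by rewrite ?hb0 ?hc0 ?hq ?expf_neq0.
  rewrite (k1_of_k0 _ _ (hUe _ _ hv) (hmu i)); congr (_ *: _); rewrite /e1 /e0; field.
  by rewrite ?hb0 ?hc0 ?hq ?expf_neq0.
move=> e0' e1' d' U' he0' he1' [hnz' hsum' hdir'] hw'.
pose b' := e0' / q ^+ d'.
have hb' : b' != 0 by rewrite mulf_neq0 ?invr_eq0 ?expf_neq0.
have hU'e : forall i x, (i <= d')%N -> x \in U' i -> k false x = (b' * q ^+ (2 * i)) *: x.
  move=> i x hi hx; have [h1 _] := hw' i hi x hx.
  move/eqP: h1; rewrite subr_eq0 qz1 // => /eqP ->.
  congr (_ *: _); rewrite /b'; field.
  by rewrite ?hb0 ?hc0 ?hq ?expf_neq0.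
have hU'e1 : forall i x, (i <= d')%N -> x \in U' i ->
    k true x = (e1' * q ^ (d'%:Z - 2 * i%:Z)) *: x.
  move=> i x hi hx; have [_ h2] := hw' i hi x hx.
  by move/eqP: h2; rewrite subr_eq0 => /eqP ->.
have [i1 [hi1 e1a]] : exists i, (i < d.+1)%N /\ b * q ^+ (2 * i) = b'.
  apply: (@decomp_val K V (k false) d.+1 U (fun i => b * q ^+ (2 * i)) b'
            (vpick (U' 0%N)) hWfull hdir).
  - by move=> i _ x hx; apply: hUe.
  - by rewrite (hU'e 0%N) ?memv_pick // muln0 expr0 mulr1.
  - by rewrite vpick0 hnz'.
have [i2 [hi2 e2a]] : exists i, (i < d'.+1)%N /\ b' * q ^+ (2 * i) = b.
  apply: (@decomp_val K V (k false) d'.+1 U' (fun i => b' * q ^+ (2 * i)) b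
            (vpick (U 0%N)) hsum' hdir').
  - by move=> i hi x hx; apply: hU'e.
  - by rewrite (hUe 0%N) ?memv_pick // muln0 expr0 mulr1.
  - by rewrite vpick0 hnz.
have hbb : b' = b.
  have : b * q ^+ (2 * (i1 + i2)) = b * q ^+ (2 * 0).
    by rewrite mulnDr exprD mulrA e1a e2a muln0 expr0 mulr1.
  move=> e; have := @pow_inj K _ _ _ _ hb0 hq hroot e.
  move/eqP; rewrite addn_eq0 => /andP[/eqP h1 _].
  by rewrite -e1a h1 muln0 expr0 mulr1.
have hd1 : (d' <= d)%N.
  have [i3 [hi3 e3]] : exists i, (i < d.+1)%N /\ b * q ^+ (2 * i) = b * q ^+ (2 * d').
    apply: (@decomp_val K V (k false) d.+1 U (fun i => b * q ^+ (2 * i)) _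
              (vpick (U' d')) hWfull hdir).
    - by move=> i _ x hx; apply: hUe.
    - by rewrite (hU'e d') ?memv_pick // hbb.
    - by rewrite vpick0 hnz'.
  by rewrite -(@pow_inj K _ _ _ _ hb0 hq hroot e3) -ltnS.
have hd2 : (d <= d')%N.
  have [i3 [hi3 e3]] : exists i, (i < d'.+1)%N /\ b' * q ^+ (2 * i) = b' * q ^+ (2 * d).
    apply: (@decomp_val K V (k false) d'.+1 U' (fun i => b' * q ^+ (2 * i)) _
              (vpick (U d)) hsum' hdir').
    - by move=> i hi x hx; apply: hU'e.
    - by rewrite (hUe d) ?memv_pick // hbb.
    - by rewrite vpick0 hnz.
  by rewrite -(@pow_inj K _ _ _ _ hb' hq hroot e3) -ltnS.
have hdd : d' = d by apply/eqP; rewrite eqn_leq hd1 hd2.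
subst d'.
have hUU : forall i, (i <= d)%N -> U' i = U i.
  move=> i hi; apply/eqP; rewrite eqEsubv; apply/andP; split; apply/subvP => x hx.
    by apply: hUm; rewrite (hU'e i x hi hx) hbb.
  apply: (@decomp_mem K V (k false) d.+1 U' (fun i => b' * q ^+ (2 * i)) x i hsum' hdir').
  - by move=> j hj y hy; apply: hU'e.
  - by move=> i' j' _ _; apply: pow_inj.
  - by [].
  - by rewrite (hUe _ _ hx) hbb.
split => //.
- by rewrite /e0 -hbb /b'; field; rewrite ?expf_neq0.
- have hv := memv_pick (U 0%N).
  have hv0' : vpick (U 0%N) != 0 by rewrite vpick0 hnz.
  have hv' : vpick (U 0%N) \in U' 0%N by rewrite hUU.
  have e : (e1' * q ^ (d%:Z - 2 * 0%:Z)) *: vpick (U 0%N) =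
           (c / (b * q ^+ (2 * 0))) *: vpick (U 0%N).
    by rewrite -hU'e1 // -(k1_of_k0 _ _ (hUe _ _ hv) (hmu 0%N)).
  move/eqP: e; rewrite -subr_eq0 -scalerBl scaler_eq0 (negPf hv0') orbF subr_eq0 qz2 //.
  rewrite muln0 expr0 divr1 mulr1 => /eqP e.
  by rewrite /e1 /e0 invfM mulrA -e mulfK // expf_neq0.
Qed.

End Withc.
End Main.

Theorem lemma14p1 (K : closedFieldType) (q : K) (V : vectType K)
  (yp ym k kinv : bool -> 'End(V)) :
  q != 0 -> not_root_of_unity q ->
  is_U_module q yp ym k kinv -> U_irreducible yp ym k kinv ->
  exists (e0 e1 : K) (d : nat) (U : nat -> {vspace V}),
    [/\ e0 != 0, e1 != 0, is_decomposition d U & weight_condition q k e0 e1 d U] /\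
        (* uniqueness of e0, e1; U_0, ..., U_d *)
        (forall (e0' e1' : K) (d' : nat) (U' : nat -> {vspace V}),
           e0' != 0 -> e1' != 0 -> is_decomposition d' U' ->
           weight_condition q k e0' e1' d' U' ->
           [/\ e0' = e0, e1' = e1, d' = d & forall i, (i <= d)%N -> U' i = U i]) /\
        (* raising / lowering properties, with U_{-1} = U_{d+1} = 0 *)
        (forall i, (i <= d)%N -> forall v, v \in U i ->
           [/\ e0 *: yp false v - q ^ (d%:Z - 2 * (i%:Z)) *: v \in Unext d U i,
               e1 *: ym true v - q ^ (2 * (i%:Z) - d%:Z) *: v \in Unext d U i,
               e0 *: ym false v - q ^ (d%:Z - 2 * (i%:Z)) *: v \in Uprev U i &
               e1 *: yp true v - q ^ (2 * (i%:Z) - d%:Z) *: v \in Uprev U i]).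
Proof.
move=> hq hroot hU hirr.
case: hU => hk [hcent [hyk [hky _]]].
have [c [hc0 hc]] := c_exists _ _ _ _ _ _ hk hcent hirr.
exact: (main_part _ _ _ _ _ _ _ hq hroot hk hyk hky hirr _ hc0 hc).
Qed.
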